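(* Let $R=\mathbb{K}[x_{i,i+1},x_{i,i+2}: i\in\mathbb{N}]$ and $I=\ker\varphi$, where $\varphi:R\to\mathbb{K}[x_i: i\in\mathbb{N}]$ is given by $\varphi(x_{i,i+1})=x_ix_{i+1}$, $\varphi(x_{i,i+2})=x_ix_{i+2}$. Then $I$ is not finitely generated up to shift, i.e. there is no finite subset $F\subseteq I$ such that the polynomials $\operatorname{sh}_k(f)$, $f\in F$, $k\in\mathbb{N}_0$, generate $I$.
   Context: $\mathbb{K}$ is a field; $\operatorname{sh}_k$ is the ring endomorphism of $R$ with $x_{i,j}\mapsto x_{i+k,j+k}$. *)

(* Defs.v *)
From HB Require Import structures.
From mathcomp Require Import all_boot all_algebra.
From mathcomp Require Import finmap.
From mathcomp Require Import monalg.

Set Implicit Arguments.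
Unset Strict Implicit.
Unset Printing Implicit Defensive.

Import GRing.Theory.
Local Open Scope ring_scope.

(* Commutative polynomial ring K[x_i : i \in I] over a field K, in the
   (possibly infinite) set of variables indexed by the choiceType I:
   the monoid algebra of commutative monomials (multinomials library). *)
Definition polyring (K : fieldType) (I : choiceType) := {malg K[{cmonom I}]}.

Definition pvar (K : fieldType) (I : choiceType) (i : I) : polyring K I :=
  << (ucm i : cmonom I) >>.

(* The K-algebra homomorphism K[x_i : i in I] -> K[x_j : j in J]
   determined by x_i |-> s i (substitution). *)
Definition psubst (K : fieldType) (I J : choiceType) (s : I -> polyring K J)
    (g : polyring K I) : polyring K J :=
  mmap (fun c : K => c%:MP : polyring K J)
       (fun m : cmonom I => \prod_(i <- finsupp m) s i ^+ m i) g.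

(* Variables of R: (i, false) stands for x_{i,i+1}, (i, true) for x_{i,i+2}. *)
Definition RVar := (nat * bool)%type.

Definition Rring (K : fieldType) := polyring K RVar.
Definition Sring (K : fieldType) := polyring K nat.

Definition phi (K : fieldType) : Rring K -> Sring K :=
  psubst (fun v : RVar =>
            pvar K v.1 * pvar K (v.1 + (if v.2 then 2 else 1))%N).

Definition sh (K : fieldType) (k : nat) : Rring K -> Rring K :=
  psubst (fun v : RVar => pvar K ((v.1 + k)%N, v.2)).

Definition in_ideal_gen (A : comRingType) (G : A -> Prop) (p : A) : Prop :=
  exists n (gs cs : 'I_n -> A),
    (forall i, G (gs i)) /\ p = \sum_(i < n) cs i * gs i.

(* Main.v *)
Require Import Defs.
From HB Require Import structures.
From mathcomp Require Import all_boot all_algebra.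
From mathcomp Require Import finmap.
From mathcomp Require Import monalg.
From mathcomp Require Import zify.
Set Implicit Arguments. Unset Strict Implicit. Unset Printing Implicit Defensive.
Import GRing.Theory.
Local Open Scope ring_scope.

Section Gen.
Variables (K : fieldType) (I J : choiceType).

Fixpoint cpow (c : cmonom J) n : cmonom J :=
  if n is n'.+1 then mmul c (cpow c n') else mone.

Lemma cpowE c n j : cpow c n j = (n * c j)%N.
Proof. elim: n => [|n IH] /=; first by rewrite cm1. by rewrite cmM IH mulSn. Qed.

Definition cm (s : I -> cmonom J) (m : cmonom I) : cmonom J :=
  \big[mmul/mone]_(v <- finsupp m) cpow (s v) (m v).

Lemma cmEv s m j : cm s m j = (\sum_(v <- finsupp m) m v * s v j)%N.
Proof.
rewrite /cm (big_morph (fun c : cmonom J => c j) (fun a b => cmM j a b) (cm1 j)).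
by apply: eq_bigr => v _; rewrite cpowE.
Qed.

Lemma UM (a b : cmonom J) : (<<a>> * <<b>> : polyring K J) = << mmul a b >>.
Proof. rewrite malgM_def fgmulUU mulr1; exact: erefl. Qed.

Lemma U1 : (<< mone >> : polyring K J) = 1.
Proof. exact: erefl. Qed.

Lemma Upow a n : (<<a>> : polyring K J) ^+ n = << cpow a n >>.
Proof. elim: n => [|n IH]; first by rewrite expr0 U1. rewrite exprS IH UM; exact: erefl. Qed.

Lemma psubstE (s : I -> polyring K J) (t : I -> cmonom J) (e : forall v, s v = << t v >>) (g : polyring K I) :
  psubst s g =
  \sum_(m <- msupp g) (g@_m)%:MP * (<< cm t m >> : polyring K J).
Proof.
rewrite /psubst mmapE; apply: eq_bigr => m _; congr (_ * _).
rewrite /cm (big_morph (fun c : cmonom J => (<< c >> : polyring K J)) (fun a b => esym (UM a b)) (esym U1)).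
by apply: eq_bigr => v _; rewrite e Upow.
Qed.

Lemma psubst_coef (s : I -> polyring K J) (t : I -> cmonom J) (e : forall v, s v = << t v >>) (g : polyring K I) (M : cmonom J) : (psubst s g)@_M =
  \sum_(m <- msupp g) g@_m * (cm t m == M)%:R.
Proof.
rewrite (psubstE e) raddf_sum; apply: eq_bigr => m _.
rewrite /= mcoeffCM mcoeffU1; exact: erefl. Qed.

End Gen.

Local Open Scope nat_scope.

Definition Df (w : RVar -> nat) (i : nat) : nat :=
  w (i, false) + w (i, true) + (if i is i'.+1 then w (i', false) else 0)
  + (if i is i'.+2 then w (i', true) else 0).

Definition uf (n : nat) (v : RVar) : nat :=
  let: (j, b) := v in
  if b then (if j == 0 then 1 else if (j %% 4 == 0) && (4 <= j <= 4 * n - 4) then 2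
             else if j == 4 * n then 1 else 0)
  else (if j == 1 then 1 else if j == 4 * n then 1 else 0).

Definition vf (n : nat) (v : RVar) : nat :=
  let: (j, b) := v in
  if b then (if (j %% 4 == 2) && (j <= 4 * n - 2) then 2 else 0)
  else (if j == 0 then 1 else if j == 4 * n + 1 then 1 else 0).

Definition dval (n i : nat) : nat :=
  if i == 0 then 1 else if i == 1 then 1 else if i == 2 then 2 else
  if i <= 4 * n then (if i %% 2 == 0 then 2 else 0) else if i <= 4 * n + 2 then 1 else 0.

Lemma Df2 w i : Df w i.+2 = w (i.+2, false) + w (i.+2, true) + w (i.+1, false) + w (i, true).
Proof. by []. Qed.

Ltac sp1 := match goal with |- context[if ?b then _ else _] => let E := fresh "E" in case E: b; try (exfalso; lia) end.
Ltac sp := rewrite /uf /vf /dval; repeat sp1; lia.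

Lemma DU n i : 1 <= n -> Df (uf n) i = dval n i.
Proof. move=> n1; case: i => [|[|i]]; [rewrite /Df /=; sp|rewrite /Df /=; sp|rewrite Df2; sp]. Qed.
Lemma DV n i : 1 <= n -> Df (vf n) i = dval n i.
Proof. move=> n1; case: i => [|[|i]]; [rewrite /Df /=; sp|rewrite /Df /=; sp|rewrite Df2; sp]. Qed.
Lemma uv_disj n v : 1 <= n -> uf n v = 0 \/ vf n v = 0.
Proof. case: v => j [] n1; sp. Qed.

Lemma fiber n (w : RVar -> nat) : 1 <= n -> (forall i, Df w i = dval n i) ->
  (forall v, w v = uf n v) \/ (forall v, w v = vf n v).
Proof.
move=> n1 H.
have ZF : forall j, 3 <= j <= 4 * n - 1 -> j %% 2 = 1 ->
   [/\ w (j, false) = 0, w (j, true) = 0, w (j.-1, false) = 0 & w (j.-2, true) = 0].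
  move=> [|[|[|i]]] // hj oj; have := H i.+3; rewrite Df2.
  have -> : dval n i.+3 = 0 by clear H; sp.
  by move=> E; split; rewrite /=; lia.
have ZB : forall j, 4 * n + 3 <= j ->
   [/\ w (j, false) = 0, w (j, true) = 0, w (j.-1, false) = 0 & w (j.-2, true) = 0].
  move=> j hj; case: j hj => [|[|i]] hj; try lia; have := H i.+2; rewrite Df2.
  have -> : dval n i.+2 = 0 by clear H; sp.
  by move=> E; split; rewrite /=; lia.
have H0 : w (0, false) + w (0, true) = 1 by have := H 0; rewrite /Df /=; clear -n1; sp.
have H1 : w (1, false) + w (1, true) + w (0, false) = 1 by have := H 1; rewrite /Df /=; clear -n1; sp.
have H2 : w (2, false) + w (2, true) + w (1, false) + w (0, true) = 2 by have := H 2; rewrite /Df /=; clear -n1; sp.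
have [Z3a Z3b Z3c Z3d] := ZF 3 (ltac:(lia)) erefl; simpl in Z3c, Z3d.
have a1 : w (0, false) <= 1 by lia.
have P : forall t, 1 <= t <= 2 * n - 1 ->
   (t %% 2 = 1 -> w (2 * t, true) = 2 * w (0, false)) /\ (t %% 2 = 0 -> w (2 * t, true) = 2 - 2 * w (0, false)).
  elim=> [|t IH] // ht.
  case: (posnP t) => [t0|tpos].
    subst t; split => // _; have -> : 2 * 1 = 2 by []. lia.
  have [IH1 IH2] := IH (ltac:(lia)).
  have Za : w ((2 * t).+2, false) = 0.
    by have [_ _ z _] := ZF (2 * t).+3 (ltac:(lia)) (ltac:(lia)); exact z.
  have [Zb _ _ _] := ZF (2 * t).+1 (ltac:(lia)) (ltac:(lia)).
  have Du : dval n (2 * t).+2 = 2 by clear -ht tpos n1; sp.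
  have := H (2 * t).+2; rewrite Df2 Du Za Zb.
  have -> : 2 * t.+1 = (2 * t).+2 by lia.
  clear -IH1 IH2 a1 ht tpos; lia.
have ZFF : forall j, ((3 <= j <= 4 * n - 1) && (j %% 2 == 1)) || ((2 <= j <= 4 * n - 2) && (j %% 2 == 0)) -> w (j, false) = 0.
  move=> j /orP [/andP [hj /eqP oj]|/andP [hj /eqP ej]].
    by have [z _ _ _] := ZF j hj oj.
  by have [_ _ z _] := ZF j.+1 (ltac:(lia)) (ltac:(lia)); exact z.
have ZFT : forall j, 1 <= j <= 4 * n - 1 -> j %% 2 = 1 -> w (j, true) = 0.
  move=> j hj oj; case: (leqP j (4 * n - 3)) => hj2.
    by have [_ _ _ z] := ZF j.+2 (ltac:(lia)) (ltac:(lia)); exact z.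
  by have [_ z _ _] := ZF j (ltac:(lia)) oj.
have ZBF : forall j, 4 * n + 2 <= j -> w (j, false) = 0.
  move=> j hj; have [_ _ z _] := ZB j.+1 (ltac:(lia)); exact z.
have ZBT : forall j, 4 * n + 1 <= j -> w (j, true) = 0.
  move=> j hj; have [_ _ _ z] := ZB j.+2 (ltac:(lia)); exact z.
have PT : forall j, 2 <= j <= 4 * n - 2 -> j %% 2 = 0 ->
   (j %% 4 = 2 -> w (j, true) = 2 * w (0, false)) /\ (j %% 4 = 0 -> w (j, true) = 2 - 2 * w (0, false)).
  move=> j hj ej; have := P (j %/ 2) (ltac:(lia)).
  have -> : 2 * (j %/ 2) = j by lia.
  move=> [Q1 Q2]; split => h; [apply: Q1|apply: Q2]; lia.
have HD : forall i, 2 <= i -> w (i, false) + w (i, true) + w (i - 1, false) + w (i - 2, true) = dval n i.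
  by move=> [|[|k]] // _; rewrite !subSS !subn0 -H.
have E0 := HD (4 * n) (ltac:(lia)).
have E1 := HD (4 * n + 1) (ltac:(lia)).
have E2 := HD (4 * n + 2) (ltac:(lia)).
have Da : dval n (4 * n) = 2 by clear -n1; sp.
have Db : dval n (4 * n + 1) = 1 by clear -n1; sp.
have Dc : dval n (4 * n + 2) = 1 by clear -n1; sp.
have e1 : 4 * n + 1 - 1 = 4 * n by lia.
have e2 : 4 * n + 1 - 2 = 4 * n - 1 by lia.
have e3 : 4 * n + 2 - 1 = 4 * n + 1 by lia.
have e4 : 4 * n + 2 - 2 = 4 * n by lia.
rewrite e1 e2 Db in E1; rewrite e3 e4 Dc in E2; rewrite Da in E0.
have Y1 := ZFF (4 * n - 1) (ltac:(apply/orP; left; apply/andP; split; lia)).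
have Y2 := PT (4 * n - 2) (ltac:(lia)) (ltac:(lia)).
have Y3 := ZBT (4 * n + 1) (ltac:(lia)).
have Y4 := ZFT (4 * n - 1) (ltac:(lia)) (ltac:(lia)).
have Y5 := ZBF (4 * n + 2) (ltac:(lia)).
have Y6 := ZBT (4 * n + 2) (ltac:(lia)).
have [Y2' _] := Y2.
have Y7 := Y2' (ltac:(lia)).
have F4 : w (4 * n, false) = 1 - w (0, false) by clear -E0 E1 E2 Y1 Y3 Y4 Y5 Y6 Y7 a1; lia.
have T4 : w (4 * n, true) = 1 - w (0, false) by clear -E0 E1 E2 Y1 Y3 Y4 Y5 Y6 Y7 a1; lia.
have F41 : w (4 * n + 1, false) = w (0, false) by clear -E0 E1 E2 Y1 Y3 Y4 Y5 Y6 Y7 a1; lia.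
have T0 : w (0, true) = 1 - w (0, false) by lia.
have F1 : w (1, false) = 1 - w (0, false) by lia.
clear H ZF ZB H0 H1 H2 Z3a Z3b Z3c Z3d P HD E0 E1 E2 Da Db Dc e1 e2 e3 e4 Y1 Y2 Y3 Y4 Y5 Y6 Y2' Y7.
have [a0|a1'] : w (0, false) = 0 \/ w (0, false) = 1 by lia.
- left; case=> j [].
  + have [->|j0] := eqVneq j 0; first by rewrite T0 a0; sp.
    have [->|j4] := eqVneq j (4 * n); first by rewrite T4 a0; sp.
    move: (ZFT j) (PT j) (ZBT j); rewrite a0; clear -j0 j4 n1; sp.
  + have [->|j0] := eqVneq j 0; first by rewrite a0; sp.
    have [->|j1] := eqVneq j 1; first by rewrite F1 a0; sp.
    have [->|j4] := eqVneq j (4 * n); first by rewrite F4 a0; sp.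
    have [->|j5] := eqVneq j (4 * n + 1); first by rewrite F41 a0; sp.
    move: (ZFF j) (ZBF j); clear -j0 j1 j4 j5 n1; sp.
- right; case=> j [].
  + have [->|j0] := eqVneq j 0; first by rewrite T0 a1'; sp.
    have [->|j4] := eqVneq j (4 * n); first by rewrite T4 a1'; sp.
    move: (ZFT j) (PT j) (ZBT j); rewrite a1'; clear -j0 j4 n1; sp.
  + have [->|j0] := eqVneq j 0; first by rewrite a1'; sp.
    have [->|j1] := eqVneq j 1; first by rewrite F1 a1'; sp.
    have [->|j4] := eqVneq j (4 * n); first by rewrite F4 a1'; sp.
    have [->|j5] := eqVneq j (4 * n + 1); first by rewrite F41 a1'; sp.
    move: (ZFF j) (ZBF j); clear -j0 j1 j4 j5 n1; sp.
Qed.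

Local Close Scope nat_scope.

Section Spec.
Variable K : fieldType.

Definition tphi (v : RVar) : cmonom nat :=
  mmul (ucm v.1) (ucm (v.1 + (if v.2 then 2 else 1))%N).
Definition tsh (k : nat) (v : RVar) : cmonom RVar := ucm ((v.1 + k)%N, v.2).

Lemma phi_coef (g : Rring K) M : (phi g)@_M =
  \sum_(m <- msupp g) g@_m * (cm tphi m == M)%:R.
Proof. by apply: psubst_coef => v; rewrite /pvar UM. Qed.

Lemma sh_coef k (g : Rring K) M : (sh k g)@_M =
  \sum_(m <- msupp g) g@_m * (cm (tsh k) m == M)%:R.
Proof. by apply: psubst_coef. Qed.

Lemma phiU (m : cmonom RVar) : phi (<< m >> : Rring K) = << cm tphi m >>.
Proof.
rewrite /phi (psubstE (t := tphi)); last by move=> v; rewrite /pvar UM.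
by rewrite msuppU1 big_seq_fset1 mcoeffU1 eqxx mul1r.
Qed.
End Spec.

Lemma sum_ind (I : choiceType) (m : cmonom I) (w : I) :
  (\sum_(v <- finsupp m) m v * (v == w))%N = m w.
Proof.
case: (boolP (w \in finsupp m)) => h.
  rewrite (big_fsetD1 _ h) /= eqxx muln1 big1_seq ?addn0 // => v /andP [_].
  by rewrite in_fsetD1 => /andP [/negPf -> _]; rewrite muln0.
rewrite big1_seq; first by apply/esym/eqP; rewrite cmE_eq0.
move=> v /andP [_ hv]; have /negPf -> : v != w by apply: contraNneq h => <-.
by rewrite muln0.
Qed.

Lemma cm_tsh k (m : cmonom RVar) w :
  cm (tsh k) m w = if (k <= w.1)%N then m ((w.1 - k)%N, w.2) else 0%N.
Proof.
rewrite cmEv /tsh; case: w => j b /=.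
have E : forall v : RVar, ucm ((v.1 + k)%N, v.2) (j, b) = ((k <= j)%N && (v == ((j - k)%N, b))) :> nat.
  case=> j' b'; rewrite cmU !xpair_eqE /=.
  case: (leqP k j) => hk /=.
    by congr (nat_of_bool (_ && _)); apply/eqP/eqP; lia.
  by rewrite (_ : (j' + k == j) = false) //; apply/negbTE; lia.
under eq_bigr do rewrite E.
case: (leqP k j) => hk /=.
  by under eq_bigr do rewrite /=; rewrite sum_ind.
by rewrite big1 // => v _; rewrite muln0.
Qed.

Local Open Scope nat_scope.
Lemma cm_tphi (m : cmonom RVar) i : cm tphi m i = Df (fun v => m v) i.
Proof.
rewrite cmEv /Df.
case: i => [|[|i]].
- have E : forall v : RVar, tphi v 0 = ((v == (0, false)) + (v == (0, true)))%N.
    case=> j b; rewrite /tphi cmM !cmU !xpair_eqE /=.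
    by case: b => /=; repeat (case: eqP => ?); lia.
  under eq_bigr do rewrite E mulnDr.
  by rewrite big_split /= !sum_ind !addn0.
- have E : forall v : RVar, tphi v 1 = ((v == (1, false)) + (v == (1, true)) + (v == (0, false)))%N.
    case=> j b; rewrite /tphi cmM !cmU !xpair_eqE /=.
    by case: b => /=; repeat (case: eqP => ?); lia.
  under eq_bigr do rewrite E !mulnDr.
  by rewrite !big_split /= !sum_ind !addn0.
- have E : forall v : RVar, tphi v i.+2 = ((v == (i.+2, false)) + (v == (i.+2, true)) + (v == (i.+1, false)) + (v == (i, true)))%N.
    case=> j b; rewrite /tphi cmM !cmU !xpair_eqE /=.
    by case: b => /=; repeat (case: eqP => ?); lia.
  under eq_bigr do rewrite E !mulnDr.
  by rewrite !big_split /= !sum_ind.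
Qed.
Local Close Scope nat_scope.

Lemma mon_sig (K : fieldType) (m : cmonom RVar) : {x : Rring K | x = << m >>}.
Proof. by exists << m >>. Qed.
Definition mon (K : fieldType) (m : cmonom RVar) : Rring K := proj1_sig (mon_sig K m).
Lemma monE (K : fieldType) (m : cmonom RVar) : mon K m = << m >>.
Proof. exact: proj2_sig (mon_sig K m). Qed.

Lemma phi_monU (K : fieldType) (m : cmonom RVar) : phi (mon K m) = << cm tphi m >>.
Proof.
rewrite monE /phi (psubstE (t := tphi)); last by move=> v; rewrite /pvar UM.
by rewrite msuppU1 big_seq_fset1 mcoeffU1 eqxx mul1r.
Qed.

Lemma mon_coef (K : fieldType) (a b : cmonom RVar) : (mon K a)@_b = (a == b)%:R.
Proof. rewrite monE; exact: mcoeffU1. Qed.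

Lemma phiB (K : fieldType) (a b : Rring K) : phi (a - b) = phi a - phi b.
Proof. rewrite /phi /psubst. by rewrite mmapB. Qed.
Lemma phi_mon_diff (K : fieldType) (a b : cmonom RVar) :
  cm tphi a = cm tphi b -> phi (mon K a - mon K b) = 0.
Proof.
move=> e.
rewrite (phiB (mon K a) (mon K b)).
apply/eqP; rewrite subr_eq0; apply/eqP.
apply: (etrans (phi_monU K a)); apply: esym; apply: (etrans (phi_monU K b)).
by rewrite e.
Qed.


Local Open Scope nat_scope.

Lemma Df_ext (x y : RVar -> nat) i : (forall v, x v = y v) -> Df x i = Df y i.
Proof. by move=> e; rewrite /Df !e; case: i => [|[|i]]; rewrite ?e. Qed.

Lemma Df_add (x y : RVar -> nat) i : Df (fun v => x v + y v) i = Df x i + Df y i.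
Proof. rewrite /Df; case: i => [|[|i]] /=; lia. Qed.

Lemma DfE (w : RVar -> nat) i : Df w i = w (i, false) + w (i, true) +
  (if 1 <= i then w (i - 1, false) else 0) + (if 2 <= i then w (i - 2, true) else 0).
Proof. by case: i => [|[|i]] //=; rewrite !subSS !subn0. Qed.

Ltac sp2 := repeat sp1; lia.

Lemma Df_shift (g : RVar -> nat) k i :
  Df (fun v => if k <= v.1 then g (v.1 - k, v.2) else 0) i = if k <= i then Df g (i - k) else 0.
Proof.
rewrite !DfE /= -!(subnAC _ k).
sp2.
Qed.

Lemma elem_le_sum (T : eqType) (s : seq T) (F : T -> nat) x : x \in s -> F x <= \sum_(y <- s) F y.
Proof.
elim: s => [|y s IH] //; rewrite in_cons big_cons => /orP [/eqP ->|/IH h].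
  exact: leq_addr.
exact: leq_trans h (leq_addl _ _).
Qed.

Lemma core n (a m m' : cmonom RVar) k : 1 <= n ->
  (forall v, m' v != 0 -> v.1 < n) ->
  (forall i, Df m' i = Df m i) ->
  (forall v, a v + (if k <= v.1 then m (v.1 - k, v.2) else 0) = uf n v) ->
  forall v, m' v = m v.
Proof.
move=> n1 hb hD ha.
pose w v := a v + (if k <= v.1 then m' (v.1 - k, v.2) else 0).
have hw : forall i, Df w i = dval n i.
  move=> i; rewrite -(DU i n1) Df_add Df_shift.
  rewrite -(Df_ext i ha) Df_add Df_shift.
  by case: ifP => // _; rewrite hD.
case: (fiber n1 hw) => hf.
  case=> j b; have := hf (j + k, b); have := ha (j + k, b); rewrite /w /= leq_addl addnK.
  lia.
have a0 : forall v, a v = 0.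
  move=> v; have := hf v; have := ha v; rewrite /w.
  case: (uv_disj v n1) => ->; lia.
exfalso.
have h0 := hf (0, false); have h1 := hf (4 * n + 1, false).
have e0 : vf n (0, false) = 1 by rewrite /vf; clear; sp2.
have e1 : vf n (4 * n + 1, false) = 1 by rewrite /vf; clear; sp2.
rewrite e0 /w !a0 /= in h0; rewrite e1 /w !a0 /= in h1.
have k0 : k = 0 by move: h0; case: ifP => //; lia.
subst k; rewrite subn0 /= in h1.
rewrite add0n in h1; have := hb (4 * n + 1, false); rewrite h1 /=.
move=> /(_ erefl); lia.
Qed.

Definition mkcm (S : {fset RVar}) (f : RVar -> nat) : cmonom RVar := [cmonom f i | i in S]%M.

Lemma mkcmE S f v : (forall v, v \notin S -> f v = 0) -> mkcm S f v = f v.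
Proof. move=> h; rewrite /mkcm cmE /= fsfun_fun; case: ifPn => // /h ->. by []. Qed.

Lemma uf_supp n j b : uf n (j, b) != 0 -> j < 4 * n + 2.
Proof. rewrite /uf; case: b; move/eqP; sp2. Qed.
Lemma vf_supp n j b : vf n (j, b) != 0 -> j < 4 * n + 2.
Proof. rewrite /vf; case: b; move/eqP; sp2. Qed.

Local Close Scope nat_scope.

Section Final.
Variable K : fieldType.
Variable F : seq (Rring K).
Hypothesis HF : forall f, f \in F -> phi f = 0.
Variable n : nat.
Hypothesis n1 : (1 <= n)%N.
Hypothesis hb : forall f m, f \in F -> m \in msupp f -> forall v : RVar, m v != 0%N -> (v.1 < n)%N.
Variables uu vv : cmonom RVar.
Hypothesis uuE : forall v, uu v = uf n v.
Hypothesis vvE : forall v, vv v = vf n v.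

Lemma KEY f k a b : f \in F -> mmul a b = uu -> (sh k f)@_b = 0.
Proof.
move=> fF ab; rewrite sh_coef big1_seq // => m /andP [_ mf].
case: eqP => [e|_]; last by rewrite mulr0.
exfalso; have h := congr1 (mcoeff (cm tphi m)) (HF fF).
rewrite phi_coef mcoeff0 (big_fsetD1 _ mf) (eqxx (cm tphi m)) mulr1 big1_seq ?addr0 in h.
  by move/eqP: h; rewrite /= addr0 mcoeff_eq0 mf.
move=> m' /andP [_]; rewrite in_fsetD1 => /andP [m'm m'f].
case: eqP => [e'|_]; last by rewrite mulr0.
exfalso; move/negP: m'm; apply; apply/cmP => v.
apply: (core (a := a) (k := k) n1 (hb fF m'f)).
  by move=> i; rewrite -!cm_tphi e'.
by move=> w; rewrite -cm_tsh e -uuE -ab cmM.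
Qed.

Lemma php : phi (mon K uu - mon K vv) = 0.
Proof.
apply: phi_mon_diff; apply/eqP/cmP => i.
by rewrite !cm_tphi (Df_ext i uuE) (Df_ext i vvE) DU // DV.
Qed.

Lemma uv : vv != uu.
Proof.
apply/eqP => e; have h1 := uuE (0%N, false); rewrite -e vvE in h1.
by move: h1 n1; rewrite /uf /vf; clear; sp2.
Qed.

Lemma final : ~ in_ideal_gen (fun g : Rring K => exists2 f, f \in F & exists k : nat, g = sh k f) (mon K uu - mon K vv).
Proof.
move=> [r [gs [cs [Hgs Hp]]]].
have e1 : (mon K uu - mon K vv)@_uu = 1.
  have := mon_coef K uu uu; have := mon_coef K vv uu.
  move: (mon K uu) (mon K vv) => x y h1 h2.
  rewrite mcoeffB h1 h2 (eqxx uu) (negbTE uv) subr0; exact: mulr1n.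
have e2 : (\sum_(i < r) cs i * gs i)@_uu = 0.
  rewrite raddf_sum; apply: big1 => i _.
  have [f fF [k ->]] := Hgs i.
  rewrite /= mcoeffMl big1 // => a _; rewrite big1 // => b _.
  case: eqP => [ab|_]; last by rewrite mulr0n.
  by rewrite (KEY k fF ab) mulr0 mul0rn.
have : (1 : K) = 0 := etrans (esym e1) (etrans (congr1 (mcoeff uu) Hp) e2).
by move/eqP; rewrite oner_eq0.
Qed.
End Final.

Unset Implicit Arguments.

Theorem corollary6p9 (K : fieldType) :
  ~ exists F : seq (Rring K),
      (forall f, f \in F -> phi f = 0) /\
      (forall p : Rring K,
          phi p = 0 <->
          in_ideal_gen (fun g : Rring K => exists2 f, f \in F & exists k : nat, g = sh k f) p).
Proof.
case=> F [HF Hgen].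
pose n := succn (\sum_(f <- F) \sum_(m <- msupp f) \sum_(v <- finsupp m) succn v.1)%N.
have n1 : (1 <= n)%N by [].
have hb : forall f m, f \in F -> m \in msupp f -> forall v : RVar, m v != 0%N -> (v.1 < n)%N.
  move=> f m fF mf v; rewrite cmE_neq0 => vm.
  rewrite ltnS; apply: leq_trans (leqnSn v.1) _; apply: leq_trans (elem_le_sum _ fF).
  apply: leq_trans (elem_le_sum _ mf).
  exact: (elem_le_sum (fun v : RVar => succn v.1) vm).
pose S := seq_fset tt ([seq (j, true) | j <- iota 0 (4 * n + 2)] ++ [seq (j, false) | j <- iota 0 (4 * n + 2)]).
have inS : forall j b, (j < 4 * n + 2)%N -> (j, b) \in S.
  move=> j b hj; rewrite seq_fsetE mem_cat; case: b; apply/orP; [left|right];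
    apply: map_f; rewrite mem_iota; lia.
have [uu uuE] : {uu : cmonom RVar | forall v, uu v = uf n v}.
  exists (mkcm S (uf n)) => v; apply: mkcmE => -[j b] hS; apply/eqP; apply: contraR hS => h; apply: inS; exact: uf_supp h.
have [vv vvE] : {vv : cmonom RVar | forall v, vv v = vf n v}.
  exists (mkcm S (vf n)) => v; apply: mkcmE => -[j b] hS; apply/eqP; apply: contraR hS => h; apply: inS; exact: vf_supp h.
apply: (final HF n1 hb uuE vvE).
apply: (Hgen _).1.
exact: (php K n1 uuE vvE).
Qed.
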